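(* Let $G$ be a realization of a bounded budget network creation game $(b_1,\dots,b_n)$-BG and let $u$ be a vertex of $G$. If either $c_{MAX}(u)\le 2$ and $u$ is not contained in any brace, or $c_{MAX}(u)=1$, then $u$ is playing its best response in both the MAX version and the SUM version of the game.
   Context: Bounded budget network creation game $(b_1,\dots,b_n)$-BG: $n$ players with integer budgets $0\le b_i\le n-1$. A strategy of player $i$ is a set $S_i\subseteq\{1,\dots,n\}\setminus\{i\}$ with $|S_i|=b_i$; a profile is realized by the directed graph $G$ on $u_1,\dots,u_n$ with an arc $\overrightarrow{u_iu_j}$ iff $j\in S_i$ (a realization). A brace is a pair $\{u,v\}$ such that both $\overrightarrow{uv}$ and $\overrightarrow{vu}$ are arcs. $U(G)$ is the undirected multigraph obtained by ignoring directions; $\operatorname{dist}(u,v)$ is the distance in $U(G)$, defined as $n^2$ between different components. SUM cost: $c_{SUM}(u)=\sum_v\operatorname{dist}(u,v)$; MAX cost: $c_{MAX}(u)=\max_v\operatorname{dist}(u,v)+(\kappa-1)n^2$, $\kappa$ the number of components of $U(G)$. A vertex plays its best response (in a version) if it cannot decrease its cost (of that version) by changing its own strategy while the other strategies are fixed. *)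

(* Defs.v *)
From mathcomp Require Import all_boot all_order.
Set Implicit Arguments. Unset Strict Implicit. Unset Printing Implicit Defensive.

Section BG.
Variable n : nat.

(* A strategy profile: player i buys arcs to the vertices in S i. *)
Definition profile := 'I_n -> {set 'I_n}.

Definition realization (b : 'I_n -> nat) (S : profile) : Prop :=
  forall i : 'I_n, i \notin S i /\ #|S i| = b i.

Definition adjU (S : profile) : rel 'I_n :=
  fun u v => (v \in S u) || (u \in S v).

Fixpoint ball (S : profile) (k : nat) (u : 'I_n) : {set 'I_n} :=
  if k is k'.+1 then
    ball S k' u :|: [set v | [exists x in ball S k' u, adjU S x v]]
  else [set u].

(* distance in U(G); n^2 between different components.
   A shortest path in a graph with n vertices has length < n. *)
Definition dist (S : profile) (u v : 'I_n) : nat :=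
  \big[minn/n ^ 2]_(k < n | v \in ball S k u) k.

Definition ncomp (S : profile) : nat := n_comp (adjU S) 'I_n.

Definition cSUM (S : profile) (u : 'I_n) : nat := \sum_(v : 'I_n) dist S u v.

Definition cMAX (S : profile) (u : 'I_n) : nat :=
  \max_(v : 'I_n) dist S u v + (ncomp S - 1) * n ^ 2.

Definition in_brace (S : profile) (u : 'I_n) : Prop :=
  exists v : 'I_n, v \in S u /\ u \in S v.

Definition deviate (S : profile) (u : 'I_n) (T : {set 'I_n}) : profile :=
  fun i => if i == u then T else S i.

Definition best_response (c : profile -> 'I_n -> nat) (b : 'I_n -> nat)
    (S : profile) (u : 'I_n) : Prop :=
  forall T : {set 'I_n}, u \notin T -> #|T| = b u ->
    c S u <= c (deviate S u T) u.

End BG.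

(* Main.v *)
Require Import Defs.
From mathcomp Require Import all_boot all_order zify.
Set Implicit Arguments. Unset Strict Implicit. Unset Printing Implicit Defensive.

Lemma bigmin_le (I : eqType) (r : seq I) (P : pred I) F x j :
  j \in r -> P j -> \big[minn/x]_(i <- r | P i) F i <= F j.
Proof.
elim: r => [//|a r IH]; rewrite inE big_cons => /orP[/eqP<- ->|jr Pj].
  exact: geq_minl.
case: (P a); last exact: IH.
exact: leq_trans (geq_minr _ _) (IH jr Pj).
Qed.

Section L.
Variable n : nat.
Implicit Types (S : profile n) (u v : 'I_n).

Lemma ball1 S u v : (v \in ball S 1 u) = (v == u) || adjU S u v.
Proof.
rewrite /= !inE; congr (_ || _); apply/existsP/idP.
  by case=> x /andP[]; rewrite inE => /eqP->.
by move=> h; exists u; rewrite inE eqxx.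
Qed.

Lemma dist_le S u v k : k < n -> v \in ball S k u -> dist S u v <= k.
Proof.
move=> kn hv; rewrite /dist; exact: (@bigmin_le _ _ _ (fun i : 'I_n => nat_of_ord i) _ (Ordinal kn) (mem_index_enum _) hv).
Qed.

Lemma dist_lb S u v m : m <= n ^ 2 ->
  (forall k, v \in ball S k u -> m <= k) -> m <= dist S u v.
Proof.
move=> hn hk; rewrite /dist; elim/big_ind: _ => //.
  by move=> x y hx hy; rewrite leq_min hx hy.
by move=> i /hk.
Qed.

Lemma dist_ge1 S u v : v != u -> 1 <= dist S u v.
Proof.
move=> vu; apply: dist_lb.
  have := ltn_ord u; nia.
by case=> [|k] //=; rewrite inE (negbTE vu).
Qed.

Lemma dist_ge2 S u v : v != u -> ~~ adjU S u v -> 2 <= dist S u v.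
Proof.
move=> vu na; apply: dist_lb.
  have h1 := ltn_ord u; have h2 := ltn_ord v.
  have hne : nat_of_ord v <> nat_of_ord u by move=> e; move/eqP: vu; apply; apply: val_inj.
  have h : 1 < n by lia.
  have : 2 <= n * n by exact: (leq_mul h (ltnW h)).
  by rewrite expnS expn1.
case=> [|[|k]] //=; first by rewrite inE (negbTE vu).
by move=> h; move: h; rewrite -/(ball S 1 u) ball1 (negbTE vu) (negbTE na).
Qed.

Lemma dist_self S u : dist S u u = 0.
Proof. apply/eqP; rewrite -leqn0; have h0 : 0 < n by exact: (leq_ltn_trans (leq0n _) (ltn_ord u)).
apply: (dist_le (k:=0) h0); by rewrite /= inE. Qed.

Lemma dist_adj S u v : v != u -> adjU S u v -> dist S u v <= 1.
Proof.
move=> vu a.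
have h1 := ltn_ord u; have h2 := ltn_ord v.
have hne : nat_of_ord v <> nat_of_ord u by move=> e; move/eqP: vu; apply; apply: val_inj.
have h : 1 < n by lia.
by apply: dist_le h _; rewrite ball1 a orbT.
Qed.

Definition gfun S u v : nat := (v != u) + ((v != u) && ~~ adjU S u v).

Lemma gfun_le S u v : gfun S u v <= dist S u v.
Proof.
rewrite /gfun; case: eqP => [->|/eqP vu] /=; first by rewrite dist_self.
case: (boolP (adjU S u v)) => a /=; first exact: dist_ge1.
exact: dist_ge2.
Qed.

Lemma gfun_ge S u v : dist S u v <= 2 -> dist S u v <= gfun S u v.
Proof.
rewrite /gfun; case: eqP => [->|/eqP vu] /=; first by rewrite dist_self.
by case: (boolP (adjU S u v)) => a /= h //; apply: dist_adj.
Qed.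

Lemma gsum S u : ~~ adjU S u u ->
  \sum_v gfun S u v + #|[set v | adjU S u v]| = \sum_v (2 * (v != u)).
Proof.
move=> nu; rewrite -sum1_card (big_mkcond (fun v => v \in _)) /= -big_split /=.
apply: eq_bigr => v _; rewrite /gfun inE.
case: eqP => [->|_] /=; first by rewrite (negbTE nu).
by case: (adjU S u v).
Qed.

Lemma cMAX_dist S u v : dist S u v <= cMAX S u.
Proof. rewrite /cMAX; apply: leq_trans _ (leq_addr _ _). exact: (@leq_bigmax 'I_n (fun w => dist S u w) v). Qed.

End L.

From Stdlib Require Import FunctionalExtensionality.

Theorem mainTheorem12 (n : nat) (b : 'I_n -> nat) (S : profile n) (u : 'I_n) :
  (forall i : 'I_n, b i <= n - 1) ->
  realization b S ->
  ((cMAX S u <= 2 /\ ~ in_brace S u) \/ cMAX S u = 1) ->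
  best_response (@cMAX n) b S u /\ best_response (@cSUM n) b S u.
Proof.
move=> _ hS hc.
have hu := ltn_ord u.
have c2 : cMAX S u <= 2 by case: hc => [[]|->].
have d2 v : dist S u v <= 2 := leq_trans (cMAX_dist S u v) c2.
have nuS : ~~ adjU S u u by rewrite /adjU orbb; case: (hS u).
set A := [set v | adjU S u v].
set In := [set v | u \in S v].
have dev (T : {set 'I_n}) : u \notin T -> #|T| = b u ->
    [/\ ~~ adjU (deviate S u T) u u,
        [set v | adjU (deviate S u T) u v] \subset T :|: In &
        #|[set v | adjU (deviate S u T) u v]| <= #|A| ].
  move=> uT cT.
  have nu' : ~~ adjU (deviate S u T) u u by rewrite /adjU /deviate eqxx orbb.
  have sub : [set v | adjU (deviate S u T) u v] \subset T :|: In.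
    apply/subsetP => v; rewrite !inE /adjU /deviate eqxx.
    case/orP=> [->//|]; case: eqP => [->|_ ->]; [by rewrite (negbTE uT)|by rewrite orbT].
  split=> //.
  case: hc => [[_ nb]|c1].
  - apply: leq_trans (subset_leq_card sub) _.
    apply: leq_trans (leq_card_setU T In) _.
    have -> : A = S u :|: In by apply/setP => v; rewrite !inE.
    rewrite cardsU cT.
    have -> : S u :&: In = set0.
      apply/setP => v; rewrite !inE; apply/negP => /andP[h1 h2]; apply: nb; by exists v.
    by rewrite cards0 subn0; case: (hS u) => _ ->.
  - apply: subset_leq_card; apply/subsetP => v; rewrite !inE => av.
    have vu : v != u by apply/eqP => e; move: av; rewrite e (negbTE nu').
    apply/negPn/negP => na.
    have := dist_ge2 vu na; have := cMAX_dist S u v; rewrite c1; lia.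
case: (leqP n 1) => hn.
  have all_u (v : 'I_n) : v = u by apply: ord_inj; have := ltn_ord v; lia.
  have eT (T : {set 'I_n}) : u \notin T -> deviate S u T = S.
    move=> uT; apply: functional_extensionality => i; rewrite /deviate.
    case: eqP => [->|//].
    apply/setP => x; rewrite (all_u x).
    by rewrite (negbTE uT); case: (hS u) => /negbTE ->.
  by split=> T uT _; rewrite eT.
split=> T uT cT; have [nu' sub le'] := dev T uT cT; set S' := deviate S u T.
-
  have lbw w : w != u -> ~~ adjU S' u w -> 2 <= cMAX S' u.
    by move=> wu na; apply: leq_trans (dist_ge2 wu na) (cMAX_dist _ _ _).
  have ex_u : exists w : 'I_n, w != u.
    exists (if nat_of_ord u == 0 then (@Ordinal n 1 hn) else (@Ordinal n 0 (ltnW hn))).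
    by case: (eqVneq (nat_of_ord u) 0) => h; apply/eqP => e; have := congr1 (@nat_of_ord n) e; rewrite /=; lia.
  have [w wu] := ex_u.
  have ge1 : 1 <= cMAX S' u := leq_trans (dist_ge1 S' wu) (cMAX_dist _ _ _).
  case: hc => [[_ _]|->//].
  case: (leqP (cMAX S u) 1) => [h|h]; first exact: leq_trans h ge1.
  have [z zu za] : exists2 z : 'I_n, z != u & ~~ adjU S u z.
    case: (pickP (fun z : 'I_n => (z != u) && ~~ adjU S u z)) => [z /andP[zu za]|hall]; first by exists z.
    exfalso.
    have : cMAX S u <= 1; last by lia.
    rewrite /cMAX.
    have -> : (ncomp S - 1) * n ^ 2 = 0.
      have : (ncomp S - 1) * n ^ 2 <= 2 by apply: leq_trans c2; exact: leq_addl.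
      have : 4 <= n ^ 2 by have := leq_mul hn hn; rewrite expnS expn1.
      nia.
    rewrite addn0; apply/bigmax_leqP => v _.
    case: (eqVneq v u) => [->|vu]; first by rewrite dist_self.
    have := hall v; rewrite /= vu /= => hv; apply: (dist_adj vu); by move: hv; case: (adjU S u v).
  have cA : #|A| < n.-1.
    have : #|u |: (z |: A)| <= #|'I_n| by apply: max_card.
    rewrite card_ord !cardsU1 !inE (negbTE za) (negbTE nuS) eq_sym (negbTE zu) /=; lia.
  have [y] : exists y, y \in ~: (u |: [set v | adjU S' u v]).
    apply/card_gt0P.
    have := cardsC (u |: [set v | adjU S' u v]); rewrite card_ord cardsU1 inE (negbTE nu') /=; have := le'; rewrite -/S'; move: cA; set a := #|A|; set x := #|~: _|; set y := #|[set v | _]|. lia.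
  rewrite !inE negb_or => /andP[yu ya]; exact: leq_trans c2 (lbw _ yu ya).
-
  rewrite /cSUM.
  have e1 := gsum nuS; have e2 := gsum nu'.
  have s1 : \sum_v dist S u v <= \sum_v gfun S u v by apply: leq_sum => v _; apply: gfun_ge.
  have s2 : \sum_v gfun S' u v <= \sum_v dist S' u v by apply: leq_sum => v _; apply: gfun_le.
  move: e1 e2 s1 s2 le'; rewrite -/S' -/A.
  set a1 := #|A|; set a2 := #|[set v | _]|; set q1 := \sum_v gfun S u v; set q2 := \sum_v gfun S' u v; set r := \sum_v (2 * _).
  set d1 := \sum_v dist S u v; set d2' := \sum_v dist S' u v. lia.
Qed.
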